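(* Let $G$ be a digraph and $t,t'\in B_n$ with $t\neq t'$. If $\mathbb{A}(G)$ satisfies the identity $t\approx t'$, then $M_G$ divides $M_{t,t'}$ and $P_G<H_{t,t'}$.
   Context: Digraphs $G=(V,E)$ have $E\subseteq V\times V$, loops allowed, possibly infinite. The graph algebra $\mathbb{A}(G)$ is the groupoid on $V\cup\{\infty\}$ with $xy=x$ if $x,y\in V$ and $(x,y)\in E$, and $xy=\infty$ otherwise. $B_n$ is the set of binary terms in which $x_1,\dots,x_n$ each occur once in this order; for $t\in B_n$ the rooted tree $G(t)$ is defined recursively: $G(x_i)$ is a single vertex, $G(t_1t_2)$ is $G(t_1)\cup G(t_2)$ plus an edge from the leftmost variable of $t_1$ to that of $t_2$; root $x_1$. With $T=G(t)$, $T'=G(t')$, depth $d_T$, height $h$: $H_{t,t'}=\min(h(T),h(T'))$ and $M_{t,t'}=\gcd\{|d_T(x)-d_{T'}(x)|:x\in\{x_1,\dots,x_n\}\}$. A strongly connected component (SCC) is trivial if it is a single vertex without a loop. For $m\ge1$, an $m$-whirl is a digraph whose vertex set is partitioned into nonempty blocks $B_0,\dots,B_{m-1}$ (indices mod $m$) with edge set exactly $\bigcup_iB_i\times B_{i+1}$. $M_G$ is the lcm of all $m$ such that some SCC of $G$ is an $m$-whirl ($1$ if there is none, $\infty$ if such $m$ are unbounded). A path is pleasant if all its vertices lie in trivial SCCs; $P_G$ is the maximal length of a pleasant path ($\infty$ if unbounded, $-\infty$ if none). *)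

(* Defs.v *)
From Stdlib Require Import ClassicalEpsilon Relations.
From mathcomp Require Import all_boot.
Set Implicit Arguments. Unset Strict Implicit. Unset Printing Implicit Defensive.

Definition pb (P : Prop) : bool :=
  if excluded_middle_informative P then true else false.

Lemma pbP (P : Prop) : reflect P (pb P).
Proof. by rewrite /pb; case: excluded_middle_informative => H; constructor. Qed.

(* Graph algebra A(G): carrier V ∪ {∞} encoded as option V (None = ∞). *)
Definition galg_op (V : Type) (E : V -> V -> Prop) (x y : option V) : option V :=
  match x, y with
  | Some a, Some b => if pb (E a b) then Some a else None
  | _, _ => None
  end.

Inductive term : Type :=
| Var : nat -> term
| App : term -> term -> term.

Fixpoint eval (V : Type) (E : V -> V -> Prop) (s : nat -> option V) (t : term)
  : option V :=
  match t with
  | Var i => s i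
  | App t1 t2 => galg_op E (eval E s t1) (eval E s t2)
  end.

Definition satisfies (V : Type) (E : V -> V -> Prop) (t t' : term) : Prop :=
  forall s : nat -> option V, eval E s t = eval E s t'.

Fixpoint vars (t : term) : seq nat :=
  match t with
  | Var i => [:: i]
  | App t1 t2 => vars t1 ++ vars t2
  end.

Definition in_B (n : nat) (t : term) : Prop := vars t = iota 1 n.

Fixpoint leftmost (t : term) : nat :=
  match t with
  | Var i => i
  | App t1 _ => leftmost t1
  end.

(* Edge set of the rooted tree G(t) (root = leftmost variable):
   G(t1 t2) = G(t1) ∪ G(t2) plus the edge leftmost(t1) -> leftmost(t2). *)
Fixpoint tree_edges (t : term) : seq (nat * nat) :=
  match t with
  | Var _ => [::]
  | App t1 t2 => (leftmost t1, leftmost t2) :: tree_edges t1 ++ tree_edges t2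
  end.

(* Depth d_T(x) of vertex x in T = G(t) (distance from the root),
   computed along the recursive construction of G(t): in G(t1 t2) the
   vertices of G(t1) keep their depth, and G(t2) hangs below the root of
   G(t1) via the edge to its own root, so its depths increase by one. *)
Fixpoint depth (t : term) (x : nat) : nat :=
  match t with
  | Var _ => 0
  | App t1 t2 => if x \in vars t1 then depth t1 x else (depth t2 x).+1
  end.

Definition height (t : term) : nat := \max_(x <- vars t) depth t x.

Definition absdiff (a b : nat) : nat := (a - b) + (b - a).

Definition Htt (t t' : term) : nat := minn (height t) (height t').

Definition Mtt (n : nat) (t t' : term) : nat :=
  \big[gcdn/0]_(x <- iota 1 n) absdiff (depth t x) (depth t' x).

Definition reach (V : Type) (E : V -> V -> Prop) : V -> V -> Prop :=
  clos_refl_trans V E.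

Definition is_scc (V : Type) (E : V -> V -> Prop) (C : V -> Prop) : Prop :=
  exists x, forall y, C y <-> (reach E x y /\ reach E y x).

Definition trivial_scc (V : Type) (E : V -> V -> Prop) (C : V -> Prop) : Prop :=
  is_scc E C /\ exists v, (forall y, C y <-> y = v) /\ ~ E v v.

(* The subgraph induced on C is an m-whirl: the vertex set C is partitioned
   into nonempty blocks B_0, ..., B_{m-1} (B_i = {v in C | f v = i}) and the
   edge set is exactly the union of B_i × B_{i+1 mod m}. *)
Definition is_whirl (V : Type) (E : V -> V -> Prop) (C : V -> Prop) (m : nat)
  : Prop :=
  0 < m /\
  exists f : V -> nat,
    (forall v, C v -> f v < m) /\
    (forall i, i < m -> exists v, C v /\ f v = i) /\
    (forall u v, C u -> C v -> (E u v <-> f v = (f u).+1 %% m)).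

Definition has_whirl (V : Type) (E : V -> V -> Prop) (m : nat) : Prop :=
  exists C, is_scc E C /\ is_whirl E C m.

(* M_G : lcm of all m such that some SCC is an m-whirl; 1 if none;
   ∞ (None) if such m are unbounded. *)
Definition MG (V : Type) (E : V -> V -> Prop) : option nat :=
  match excluded_middle_informative
          (exists B, forall m, has_whirl E m -> m <= B) with
  | left Hb =>
      let B := proj1_sig (constructive_indefinite_description _ Hb) in
      Some (\big[lcmn/1]_(m < B.+1 | pb (has_whirl E m)) m)
  | right _ => None
  end.

Definition MG_divides (g : option nat) (m : nat) : Prop :=
  match g with
  | Some l => l %| m
  | None => False
  end.

Fixpoint walk (V : Type) (E : V -> V -> Prop) (v : V) (vs : seq V) : Prop :=
  match vs with
  | [::] => True
  | w :: ws => E v w /\ walk E w ws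
  end.

Definition in_trivial_scc (V : Type) (E : V -> V -> Prop) (v : V) : Prop :=
  exists C, trivial_scc E C /\ C v.

(* A pleasant path of length k exists: k edges, all vertices in trivial SCCs.
   (A walk through trivial SCCs never repeats a vertex, so it is a path.) *)
Definition pleasant_len (V : Type) (E : V -> V -> Prop) (k : nat) : Prop :=
  exists (v : V) (vs : seq V),
    walk E v vs /\ size vs = k /\ (forall w, (w = v \/ List.In w vs) -> in_trivial_scc E w).

Inductive ext : Type := NegInf | Fin of nat | PosInf.

Lemma pb_ex (P : nat -> Prop) : (exists n, P n) -> exists n, pb (P n).
Proof. by case=> n Hn; exists n; apply/pbP. Qed.

Lemma pb_bound (P : nat -> Prop) (Hb : exists B, forall n, P n -> n <= B) :
  forall n, pb (P n) ->
    n <= proj1_sig (constructive_indefinite_description _ Hb).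
Proof.
case: (constructive_indefinite_description _ Hb) => B HB n /pbP; exact: HB.
Qed.

Definition PG (V : Type) (E : V -> V -> Prop) : ext :=
  match excluded_middle_informative (exists k, pleasant_len E k) with
  | right _ => NegInf
  | left Hex =>
      match excluded_middle_informative
              (exists B, forall k, pleasant_len E k -> k <= B) with
      | right _ => PosInf
      | left Hb =>
          Fin (@ex_maxn (fun k => pb (pleasant_len E k)) _
                 (pb_ex Hex) (pb_bound Hb))
      end
  end.

Definition ext_lt (x : ext) (h : nat) : Prop :=
  match x with
  | NegInf => True
  | Fin p => p < h
  | PosInf => False
  end.

(* Main.v *)
Require Import Defs.
From Stdlib Require Import ClassicalEpsilon Relations.
From mathcomp Require Import all_boot zify.
Set Implicit Arguments. Unset Strict Implicit. Unset Printing Implicit Defensive.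

Lemma eval_some V (E : V -> V -> Prop) (g : nat -> V) t :
  (forall a b, (a, b) \in tree_edges t -> E (g a) (g b)) ->
  eval E (fun i => Some (g i)) t = Some (g (leftmost t)).
Proof.
elim: t => [i|t1 IH1 t2 IH2] //= H.
rewrite IH1 ?IH2; last 2 first.
- by move=> a b Hab; apply: H; rewrite in_cons mem_cat Hab !orbT.
- by move=> a b Hab; apply: H; rewrite in_cons mem_cat Hab !orbT.
rewrite /galg_op; case: pbP => // HN; exfalso; apply: HN; apply: H; by rewrite in_cons eqxx.
Qed.

Lemma eval_some_inv V (E : V -> V -> Prop) (g : nat -> V) t :
  eval E (fun i => Some (g i)) t <> None ->
  eval E (fun i => Some (g i)) t = Some (g (leftmost t)) /\
  (forall a b, (a, b) \in tree_edges t -> E (g a) (g b)).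
Proof.
elim: t => [i|t1 IH1 t2 IH2] /=.
  by move=> _; split=> // a b; rewrite in_nil.
case e1: (eval E _ t1) => [u|]; last by [].
case e2: (eval E _ t2) => [w|]; last by [].
rewrite /=; case: pbP => // Huw _.
have [] := IH1 ltac:(by rewrite e1); rewrite e1 => -[eu] H1; subst u.
have [] := IH2 ltac:(by rewrite e2); rewrite e2 => -[ew] H2; subst w.
split=> // a b; rewrite in_cons mem_cat => /orP [/eqP | /orP [] ?]; auto.
by case=> -> ->.
Qed.

Lemma leftmost_vars t : vars t = leftmost t :: behead (vars t).
Proof. elim: t => [i|t1 IH1 t2 _] //=; by rewrite IH1. Qed.

Lemma leftmost_in t : leftmost t \in vars t.
Proof. by rewrite leftmost_vars in_cons eqxx. Qed.

Lemma depth_leftmost t : depth t (leftmost t) = 0.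
Proof. by elim: t => //= t1 IH1 t2 _; rewrite leftmost_in. Qed.

Lemma depth_pos t x : x \in vars t -> x != leftmost t -> 0 < depth t x.
Proof.
elim: t => [i|t1 IH1 t2 IH2] /=; first by rewrite inE => ->.
case: ifP => // xin _ ne; exact: IH1.
Qed.

Lemma edge_vars t a b : (a,b) \in tree_edges t -> (a \in vars t) && (b \in vars t).
Proof.
elim: t => [i|t1 IH1 t2 IH2] //=.
rewrite in_cons mem_cat => /orP [/eqP | /orP [] /[dup] e].
- case=> -> ->; by rewrite !mem_cat !leftmost_in orbT.
- by move/IH1 => /andP [ha hb]; rewrite !mem_cat ha hb.
- by move/IH2 => /andP [ha hb]; rewrite !mem_cat ha hb !orbT.
Qed.

Lemma depth_edge t a b : uniq (vars t) -> (a,b) \in tree_edges t ->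
  depth t b = (depth t a).+1.
Proof.
elim: t => [i|t1 IH1 t2 IH2] //=; rewrite cat_uniq => /and3P [u1 dis u2].
rewrite in_cons mem_cat => /orP [/eqP | /orP [] e].
- case=> -> ->; rewrite leftmost_in depth_leftmost.
  have /negbTE -> : leftmost t2 \notin vars t1 := (hasPn dis) _ (leftmost_in t2).
  by rewrite depth_leftmost.
- have /andP [ha hb] := edge_vars e; rewrite ha hb; exact: IH1.
- have /andP [ha hb] := edge_vars e.
  have /negbTE -> : a \notin vars t1 := hasPn dis _ ha.
  have /negbTE -> : b \notin vars t1 := hasPn dis _ hb.
  by rewrite (IH2 u2 e).
Qed.

Lemma tree_ind (P : nat -> Prop) t : P (leftmost t) ->
  (forall a b, (a,b) \in tree_edges t -> P a -> P b) ->
  forall x, x \in vars t -> P x.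
Proof.
elim: t => [i|t1 IH1 t2 IH2] /=; first by move=> H _ x; rewrite inE => /eqP ->.
move=> H0 H x; rewrite mem_cat => /orP [] xin.
- by apply: IH1 => // a b e; apply: H; rewrite in_cons mem_cat e !orbT.
- apply: IH2 xin => [|a b e].
  + by apply: (H (leftmost t1)) => //; rewrite in_cons eqxx.
  + by apply: H; rewrite in_cons mem_cat e !orbT.
Qed.

Lemma inB_leftmost n t : in_B n t -> leftmost t = 1 /\ 0 < n.
Proof.
rewrite /in_B leftmost_vars; case: n => [|n] //= [-> _]; done.
Qed.

Lemma size_vars_pos t : 0 < size (vars t).
Proof. by rewrite leftmost_vars. Qed.

Lemma app_split t1 t2 a n k : vars (App t1 t2) = iota a n -> k = size (vars t1) ->
  [/\ vars t1 = iota a k, vars t2 = iota (a+k) (n-k), k < n,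
     depth (App t1 t2) (a+k) = 1 &
     forall x, a + k < x < a + n -> 1 < depth (App t1 t2) x].
Proof.
move=> /= Hv Hk.
have Hs : size (vars t1) + size (vars t2) = n by rewrite -size_cat Hv size_iota.
have p1 := size_vars_pos t1; have p2 := size_vars_pos t2.
have Hn : n = k + (n - k) by lia.
have Hv2 : vars t1 ++ vars t2 = iota a k ++ iota (a+k) (n-k) by rewrite -iotaD -Hn.
move: Hv2 => /eqP; rewrite eqseq_cat ?size_iota // => /andP [/eqP h1 /eqP h2].
have nin : forall x, a + k <= x -> x \notin vars t1.
  by move=> x hx; rewrite h1 mem_iota; apply/negP => /andP [_ ?]; lia.
have lm2 : leftmost t2 = a + k.
  by move: (leftmost_vars t2); rewrite h2; case: (n - k) => [|m] //= [].
split => //; try lia.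
- by rewrite /= (negbTE (nin _ (leqnn _))) -lm2 depth_leftmost.
- move=> x /andP [hx1 hx2]; rewrite /= (negbTE (nin _ (ltnW hx1))) ltnS.
  apply: depth_pos; first by rewrite h2 mem_iota; lia.
  by rewrite lm2; apply/eqP; lia.
Qed.

Lemma depth_inj t : forall t' a n, vars t = iota a n -> vars t' = iota a n ->
  (forall x, x \in iota a n -> depth t x = depth t' x) -> t = t'.
Proof.
elim: t => [i|t1 IH1 t2 IH2] [i'|t1' t2'] a n.
- rewrite /=; by case: n => [|[|n]] //= [->] [->].
- rewrite /=; move=> H1 H2 _; have := size_vars_pos t1'; have := size_vars_pos t2'.
  have := congr1 size H2; rewrite -H1 size_cat /=; lia.
- rewrite /=; move=> H2 H1 _; have := size_vars_pos t1; have := size_vars_pos t2.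
  have := congr1 size H2; rewrite -H1 size_cat /=; lia.
move=> Hv Hv' Hd.
have [h1 h2 kn d1 d2] := app_split Hv (erefl _).
have [h1' h2' kn' d1' d2'] := app_split Hv' (erefl _).
set k := size (vars t1) in h1 h2 kn d1 d2.
set k' := size (vars t1') in h1' h2' kn' d1' d2'.
have ek : k = k'.
  case: (ltngtP k k') => // hk.
  - have := Hd (a + k'); rewrite mem_iota d1' => /(_ ltac:(lia)) e.
    have := d2 (a + k'); rewrite e; lia.
  - have := Hd (a + k); rewrite mem_iota d1 => /(_ ltac:(lia)) e.
    have := d2' (a + k); rewrite -e; lia.
rewrite -ek in h1' h2'.
congr App.
- apply: (IH1 _ a k h1 h1') => x hx.
  have hx1 : x \in vars t1 by rewrite h1.
  have hx1' : x \in vars t1' by rewrite h1'.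
  have := Hd x; rewrite /= hx1 hx1' => -> //.
  by rewrite mem_iota; move: hx; rewrite mem_iota; lia.
- apply: (IH2 _ (a + k) (n - k) h2 h2') => x hx.
  have hx1 : x \notin iota a k by rewrite mem_iota; move: hx; rewrite mem_iota; lia.
  have e : x \in iota a n by rewrite mem_iota; move: hx; rewrite mem_iota; lia.
  have := Hd x e; rewrite /= h1 (negbTE hx1) h1' (negbTE hx1); exact: succn_inj.
Qed.

Lemma absdiff_dvd m a b : a = b %[mod m] -> m %| absdiff a b.
Proof.
rewrite /absdiff => h; case: (leqP a b) => hab.
- have -> : a - b = 0 by apply/eqP; rewrite subn_eq0.
  by rewrite add0n -eqn_mod_dvd // h.
- have -> : b - a = 0 by apply/eqP; rewrite subn_eq0 ltnW.
  by rewrite addn0 -eqn_mod_dvd ?(ltnW hab) // h.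
Qed.

Lemma gcd_list_dvd (r : seq nat) F y : y \in r -> \big[gcdn/0]_(x <- r) F x %| F y.
Proof.
elim: r => [|z r IH] //; rewrite in_cons big_cons => /orP [/eqP -> | /IH h].
- exact: dvdn_gcdl.
- exact: dvdn_trans (dvdn_gcdr _ _) h.
Qed.

Lemma modS_eq x m : x.+1 %% m = (x %% m).+1 %% m.
Proof. by rewrite -[x.+1]addn1 -[(x %% m).+1]addn1 modnDml. Qed.

Lemma whirl_dvd V (E : V -> V -> Prop) n t t' m : in_B n t -> in_B n t' ->
  satisfies E t t' -> has_whirl E m -> m %| Mtt n t t'.
Proof.
move=> Ht Ht' Hs [C [_ [m0 [f [fC [fsurj fE]]]]]].
pose w i := proj1_sig (constructive_indefinite_description _ (fsurj (i %% m) (ltn_pmod i m0))).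
have wC i : C (w i) by rewrite /w; case: constructive_indefinite_description => v [].
have wf i : f (w i) = i %% m by rewrite /w; case: constructive_indefinite_description => v [].
pose g x := w (depth t x).
have ut : uniq (vars t) by rewrite Ht iota_uniq.
have ut' : uniq (vars t') by rewrite Ht' iota_uniq.
have HT : forall a b, (a, b) \in tree_edges t -> E (g a) (g b).
  move=> a b e; apply/(fE _ _ (wC _) (wC _)); rewrite /g !wf (depth_edge ut e); exact: modS_eq.
have := eval_some HT; rewrite Hs => H'.
have H'' : eval E (fun i => Some (g i)) t' <> None by move=> hh; rewrite hh in H'.
have [_ HT'] := eval_some_inv H''.
have [l1 n0] := inB_leftmost Ht; have [l1' _] := inB_leftmost Ht'.
have P : forall x, x \in vars t' -> depth t x = depth t' x %[mod m].
  apply: (tree_ind (P := fun x => depth t x = depth t' x %[mod m])).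
  - by rewrite depth_leftmost l1' -l1 depth_leftmost.
  - move=> a b e ha; rewrite (depth_edge ut' e) modS_eq -ha -modS_eq.
    have := (fE _ _ (wC _) (wC _)).1 (HT' a b e); rewrite /g !wf => ->.
    by rewrite -modS_eq.
rewrite /Mtt big_seq; apply: (big_ind (fun y => m %| y)) => //.
- by move=> x y hx hy; rewrite dvdn_gcd hx hy.
- by move=> x hx; apply: absdiff_dvd; apply: P; rewrite Ht'.
Qed.

Lemma walk_edge V (E : V -> V -> Prop) d v vs i : walk E v vs -> i < size vs ->
  E (nth d (v::vs) i) (nth d (v::vs) i.+1).
Proof.
elim: vs v i => [|w ws IH] v i //= [Hvw Hw]; case: i => [|i] //= Hi; exact: IH.
Qed.

Lemma walk_reach V (E : V -> V -> Prop) d v vs i j : walk E v vs -> i <= j -> j <= size vs ->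
  reach E (nth d (v::vs) i) (nth d (v::vs) j).
Proof.
move=> Hw; elim: j => [|j IH] hij hj.
- have -> : i = 0 by lia.
  exact: rt_refl.
- case: (ltnP i j.+1) => h.
  + apply: rt_trans (IH _ _) (rt_step _ _ _ _ (walk_edge d Hw _)); lia.
  + have -> : i = j.+1 by lia.
    exact: rt_refl.
Qed.

Lemma walk_in V (d v : V) vs i : i <= size vs ->
  nth d (v::vs) i = v \/ List.In (nth d (v::vs) i) vs.
Proof.
elim: vs v i => [|w ws IH] v [|i] //= hi; try by left.
right; have [->|h] := IH w i hi; [by left | by right].
Qed.

Lemma triv_no_back V (E : V -> V -> Prop) (v : V) vs i j : walk E v vs ->
  (forall w, w = v \/ List.In w vs -> in_trivial_scc E w) -> i <= j -> j <= size vs ->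
  ~ E (nth v (v::vs) j) (nth v (v::vs) i).
Proof.
move=> Hw Hp Hij Hj He.
have [C [[[x Hx] [u [HC Hu]]] Cj]] := Hp _ (walk_in v v Hj).
have Rij := walk_reach v Hw Hij Hj.
have Rji : reach E (nth v (v::vs) j) (nth v (v::vs) i) := rt_step _ _ _ _ He.
have /Hx [Rxj Rjx] := Cj.
have Ci : C (nth v (v::vs) i).
  by apply/Hx; split; [exact: rt_trans Rxj Rji | exact: rt_trans Rij Rjx].
apply: Hu; move/HC: Ci => Ei; move/HC: Cj => Ej.
by rewrite -{1}Ej -Ei.
Qed.

Lemma depth_le_height t x : x \in vars t -> depth t x <= height t.
Proof. by move=> hx; rewrite /height (leq_bigmax_seq (F := fun x => depth t x) (P := xpredT) _ hx). Qed.

Lemma half V (E : V -> V -> Prop) n t t' k : in_B n t -> in_B n t' ->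
  satisfies E t t' -> pleasant_len E k -> height t <= k ->
  forall x, x \in vars t' -> depth t' x <= depth t x.
Proof.
move=> Ht Ht' Hs [v [vs [Hw [Hsz Hp]]]] Hk.
pose g x := nth v (v::vs) (depth t x).
have ut : uniq (vars t) by rewrite Ht iota_uniq.
have ut' : uniq (vars t') by rewrite Ht' iota_uniq.
have Hd : forall x, x \in vars t -> depth t x <= size vs.
  by move=> x hx; rewrite Hsz; apply: leq_trans (depth_le_height hx) Hk.
have HT : forall a b, (a, b) \in tree_edges t -> E (g a) (g b).
  move=> a b e; rewrite /g (depth_edge ut e); apply: walk_edge => //.
  have /andP [_ hb] := edge_vars e; have := Hd b hb; by rewrite (depth_edge ut e).
have := eval_some HT; rewrite Hs => H'.
have H'' : eval E (fun i => Some (g i)) t' <> None by move=> hh; rewrite hh in H'.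
have [_ HT'] := eval_some_inv H''.
have lt : forall a b, (a,b) \in tree_edges t' -> depth t a < depth t b.
  move=> a b e; have := HT' a b e; rewrite /g.
  have /andP [ha hb] := edge_vars e.
  rewrite Ht' -Ht in ha hb.
  case: (leqP (depth t b) (depth t a)) => // hba He; exfalso.
  exact: (triv_no_back Hw Hp hba (Hd _ ha) He).
have [l1 _] := inB_leftmost Ht; have [l1' _] := inB_leftmost Ht'.
apply: (tree_ind (P := fun x => depth t' x <= depth t x)).
- by rewrite depth_leftmost.
- move=> a b e ha; rewrite (depth_edge ut' e); exact: leq_ltn_trans ha (lt a b e).
Qed.

Lemma key V (E : V -> V -> Prop) n t t' k : in_B n t -> in_B n t' ->
  satisfies E t t' -> pleasant_len E k -> height t <= k ->
  forall x, x \in iota 1 n -> depth t x = depth t' x.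
Proof.
move=> Ht Ht' Hs Hp Hk.
have Hs' : satisfies E t' t by move=> s; rewrite Hs.
have h1 := half Ht Ht' Hs Hp Hk.
have Hh : height t' <= k.
  apply: leq_trans Hk; rewrite /height; apply/bigmax_leqP_seq => x hx _.
  apply: leq_trans (h1 x hx) _; apply: depth_le_height; by rewrite Ht -Ht'.
have h2 := half Ht' Ht Hs' Hp Hh.
move=> x hx; apply/eqP; rewrite eqn_leq.
by rewrite h2 ?Ht // h1 ?Ht'.
Qed.

Lemma plen_lt V (E : V -> V -> Prop) n t t' k : in_B n t -> in_B n t' -> t <> t' ->
  satisfies E t t' -> pleasant_len E k -> k < Htt t t'.
Proof.
move=> Ht Ht' Hne Hs Hp; rewrite ltnNge; apply/negP => Hk.
have Hs' : satisfies E t' t by move=> s; rewrite Hs.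
rewrite /Htt in Hk.
case: (leqP (height t) (height t')) => Hle.
- apply: Hne; apply: (depth_inj Ht Ht'); apply: (key Ht Ht' Hs Hp); lia.
- apply: Hne; symmetry; apply: (depth_inj Ht' Ht); apply: (key Ht' Ht Hs' Hp); lia.
Qed.

Theorem lemma6p6 (V : Type) (E : V -> V -> Prop) (n : nat) (t t' : term) :
  in_B n t -> in_B n t' -> t <> t' -> satisfies E t t' ->
  MG_divides (MG E) (Mtt n t t') /\ ext_lt (PG E) (Htt t t').
Proof.
move=> Ht Ht' Hne Hs; split.
- rewrite /MG; case: excluded_middle_informative => [Hb | Hnb] /=.
  + apply: (big_ind (fun y => y %| Mtt n t t')) => [|x y hx hy|i /pbP Hw].
    * exact: dvd1n.
    * by rewrite dvdn_lcm hx hy.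
    * exact: whirl_dvd Ht Ht' Hs Hw.
  + apply: Hnb; case: (posnP (Mtt n t t')) => [M0 | Mpos].
    * exfalso; apply: Hne; apply: (depth_inj Ht Ht') => x hx.
      have := gcd_list_dvd (fun x => absdiff (depth t x) (depth t' x)) hx.
      rewrite -/(Mtt n t t') M0 dvd0n /absdiff; lia.
    * exists (Mtt n t t') => m Hw; apply: dvdn_leq Mpos (whirl_dvd Ht Ht' Hs Hw).
- rewrite /PG; case: excluded_middle_informative => [Hex|] //=.
  case: excluded_middle_informative => [Hb|Hnb] /=.
  + case: ex_maxnP => p /pbP Hp _; exact: plen_lt Ht Ht' Hne Hs Hp.
  + apply: Hnb; exists (Htt t t') => k /(plen_lt Ht Ht' Hne Hs); exact: ltnW.
Qed.
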